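(* Consider the algorithm OMM run on a matroid bandit $(M,P)$, and fix any episode $t\ge 1$. Let $\pi_t$ be a bijection given for the bases $A^*$ and $A^t$ (with the orderings described in the context) with the properties that $\{a^t_1,\dots,a^t_{k-1},a^*_{\pi_t(k)}\}\in\mathcal I$ for all $k$ and $\pi_t(k)=i$ whenever $a^t_k=a^*_i$. Define $\mathbb 1_{e,k}(t)=\mathbf 1[\exists i: a^t_i=e,\ \pi_t(i)=k]$. Then, with $w\sim P$ independent of $A^t$, $$\mathbb E_{w}\big[f(A^*,w)-f(A^t,w)\big]\le\sum_{e\in\bar A^*}\sum_{k=1}^{K_e}\Delta_{e,k}\,\mathbb 1_{e,k}(t).$$ Moreover, whenever $\mathbb 1_{e,k}(t)=1$ we have $U_t(e)\ge U_t(a^*_k)$; and $$\sum_{e\in\bar A^*}\sum_{k=1}^{K_e}\mathbb 1_{e,k}(t)\le K,\qquad \sum_{k=1}^{K_e}\mathbb 1_{e,k}(t)\le 1\ \text{ for every } e\in\bar A^*.$$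
   Context: A matroid $M=(E,\mathcal I)$ has ground set $E=\{1,\dots,L\}$ and rank $K$ (all bases, i.e. maximal independent sets, have cardinality $K$). For $X\in\mathcal I$ let $E(X)=\{e\in E\setminus X: X\cup\{e\}\in\mathcal I\}$. For $A\subseteq E$ and $w\in\mathbb R^L$ let $f(A,w)=\sum_{e\in A}w(e)$. A matroid bandit is a pair $(M,P)$ where $M$ is a known matroid and $P$ is an unknown probability distribution on $[0,1]^L$ (no independence between coordinates is assumed); $\bar w=\mathbb E_{w\sim P}[w]$. Weight vectors $w_0,w_1,w_2,\dots$ are drawn i.i.d. from $P$. $A^*=\{a^*_1,\dots,a^*_K\}$ is a fixed basis maximizing $f(A,\bar w)$ over $A\in\mathcal I$, indexed so that $\bar w(a^*_1)\ge\dots\ge\bar w(a^*_K)$; $\bar A^*=E\setminus A^*$ is the set of suboptimal items. For $e\in\bar A^*$ and $k\in\{1,\dots,K\}$, $\Delta_{e,k}=\bar w(a^*_k)-\bar w(e)$, and $K_e=|\{k:\Delta_{e,k}>0\}|$ (so $\Delta_{e,k}>0$ iff $k\le K_e$). Algorithm OMM (Optimistic Matroid Maximization): Initialization: observe $w_0$, set $\hat w_{e,1}=w_0(e)$ and $T_e(0)=1$ for all $e\in E$. For episodes $t=1,\dots,n$: compute $U_t(e)=\hat w_{e,T_e(t-1)}+c_{t-1,T_e(t-1)}$ for all $e$, where $c_{t,s}=\sqrt{2\log(t)/s}$ (with $c_{0,s}=0$); order the items as $e^t_1,\dots,e^t_L$ with $U_t(e^t_1)\ge\dots\ge U_t(e^t_L)$;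 start with $A^t=\emptyset$ and for $i=1,\dots,L$ add $e^t_i$ to $A^t$ if $e^t_i\in E(A^t)$. Then observe $w_t(e)$ for all $e\in A^t$ (semi-bandit feedback); set $T_e(t)=T_e(t-1)+\mathbf 1[e\in A^t]$, and for $e\in A^t$ update $\hat w_{e,T_e(t)}=\big(T_e(t-1)\hat w_{e,T_e(t-1)}+w_t(e)\big)/T_e(t)$; thus $\hat w_{e,s}$ is the average of the first $s$ observed weights of item $e$ and $T_e(t)$ is the number of observations of $e$ after episode $t$. The chosen basis is written $A^t=\{a^t_1,\dots,a^t_K\}$, where $a^t_k$ is the $k$-th item added to $A^t$ in episode $t$. *)

(* Defs.v *)
From HB Require Import structures.
From Stdlib Require Import Reals.
From mathcomp Require Import all_boot.
Set Implicit Arguments. Unset Strict Implicit. Unset Printing Implicit Defensive.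

HB.instance Definition _ := Monoid.isComLaw.Build R R0 Rplus (fun x y z => esym (Rplus_assoc x y z)) Rplus_comm Rplus_0_l.

Local Open Scope R_scope.

Definition Rleb (x y : R) : bool := if Rle_dec x y then true else false.

Section Matroid.
Variable L : nat.
Variable indep : {set 'I_L} -> bool.

Definition is_basis (B : {set 'I_L}) : Prop :=
  indep B /\ forall e, e \notin B -> ~~ indep (e |: B).

Definition matroid (K : nat) : Prop :=
  [/\ indep set0,
      (forall A B : {set 'I_L}, B \subset A -> indep A -> indep B),
      (forall A B : {set 'I_L}, indep A -> indep B -> (#|A| < #|B|)%N ->
          exists2 e, e \in B :\: A & indep (e |: A))
    & (forall B, is_basis B -> #|B| = K)].

Definition augments (X : {set 'I_L}) (e : 'I_L) : bool :=
  (e \notin X) && indep (e |: X).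

Fixpoint greedy_from (A : seq 'I_L) (s : seq 'I_L) : seq 'I_L :=
  match s with
  | [::] => A
  | e :: s' => greedy_from (if augments [set x in A] e then rcons A e else A) s'
  end.
Definition greedy (s : seq 'I_L) : seq 'I_L := greedy_from [::] s.

Definition fsum (A : {set 'I_L}) (w : 'I_L -> R) : R := \big[Rplus/0]_(e in A) w e.

Definition conf (t s : nat) : R :=
  if t == 0%N then 0 else sqrt (2 * ln (INR t) / INR s).

(* OMM run, driven by the realized weights ws t = w_t and the orderings
   ords t = (e^t_1, ..., e^t_L) chosen in episode t (ties broken arbitrarily).
   omm_state t = (T_e(t), sum of the T_e(t) observed weights of e). *)
Variable ws : nat -> 'I_L -> R.
Variable ords : nat -> seq 'I_L.

Definition omm_choice (t : nat) : seq 'I_L := greedy (ords t).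

Fixpoint omm_state (t : nat) : ('I_L -> nat) * ('I_L -> R) :=
  match t with
  | 0%N => (fun _ => 1%N, ws 0%N)
  | t'.+1 =>
      let (T, S) := omm_state t' in
      let A := omm_choice t'.+1 in
      (fun e => (T e + (e \in A))%N,
       fun e => S e + (if e \in A then ws t'.+1 e else 0))
  end.

Definition what (t : nat) (e : 'I_L) : R :=
  let (T, S) := omm_state t in S e / INR (T e).

Definition ucb (t : nat) (e : 'I_L) : R :=
  what t.-1 e + conf t.-1 ((omm_state t.-1).1 e).

Definition omm_valid_run : Prop :=
  forall t, (1 <= t)%N ->
    perm_eq (ords t) (enum 'I_L) /\
    sorted (fun x y => Rleb (ucb t y) (ucb t x)) (ords t).

End Matroid.

Section Regret.
Variables (L K : nat) (wbar : 'I_L -> R) (astar : 'I_K -> 'I_L) (at_ : 'I_K -> 'I_L)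
          (pi : 'I_K -> 'I_K).

Definition Astar : {set 'I_L} := [set astar k | k : 'I_K].

(* Delta_{e,k} (k is 0-based: k : 'I_K stands for k+1) *)
Definition gapd (e : 'I_L) (k : 'I_K) : R := wbar (astar k) - wbar e.

Definition Ke (e : 'I_L) : nat := #|[set k : 'I_K | Rleb (gapd e k) 0 == false]|.

Definition indic (e : 'I_L) (k : 'I_K) : nat :=
  if [exists i : 'I_K, (at_ i == e) && (pi i == k)] then 1%N else 0%N.
End Regret.

(* Main.v *)
Require Import Defs.
From HB Require Import structures.
From Stdlib Require Import Reals Lra.
From mathcomp Require Import all_boot.
Local Open Scope R_scope.

Lemma RlebP (x y : R) : reflect (x <= y) (Rleb x y).
Proof. rewrite /Rleb; case: Rle_dec => h; constructor => //. Qed.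

Lemma big_Rle (I : finType) (P : pred I) (F G : I -> R) :
  (forall i, P i -> F i <= G i) ->
  \big[Rplus/0]_(i | P i) F i <= \big[Rplus/0]_(i | P i) G i.
Proof.
move=> H; apply: (big_ind2 (fun x y => x <= y)) => //; first lra.
move=> *; lra.
Qed.

Lemma big_Rsub (I : finType) (P : pred I) (F G : I -> R) :
  \big[Rplus/0]_(i | P i) (F i - G i) =
  \big[Rplus/0]_(i | P i) F i - \big[Rplus/0]_(i | P i) G i.
Proof.
elim/big_rec3: _ => [|i a b c _ ->]; lra.
Qed.

Section G.
Variables (L : nat) (indep : {set 'I_L} -> bool).

Lemma greedy_from_cat A s1 s2 :
  greedy_from indep A (s1 ++ s2) = greedy_from indep (greedy_from indep A s1) s2.
Proof. revert A; induction s1 as [|x s IH] => A //=. Qed.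

Lemma greedy_from_prefix A s : exists r, greedy_from indep A s = A ++ r.
Proof.
elim: s A => [|x s IH] A /=; first by exists [::]; rewrite cats0.
case: ifP => _.
  by have [r ->] := IH (rcons A x); exists (x :: r); rewrite cat_rcons.
by have [r ->] := IH A; exists r.
Qed.

Lemma greedy_from_sub A s x :
  x \in greedy_from indep A s -> (x \in A) || (x \in s).
Proof.
elim: s A => [|y s IH] A /=; first by move->.
move/IH; rewrite in_cons; case/orP => [|->]; last by rewrite !orbT.
case: ifP => _; last by move->.
by rewrite mem_rcons in_cons => /orP[->|->]; rewrite ?orbT.
Qed.

Lemma greedy_from_uniq A s : uniq A -> uniq (greedy_from indep A s).
Proof.
elim: s A => //= x s IH A uA; apply: IH; case: ifP => // /andP[xA _].
by rewrite rcons_uniq uA andbT; move: xA; rewrite inE.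
Qed.
End G.

Lemma mem_take_enum n K (j : 'I_K) : (j \in take n (enum 'I_K)) = (j < n)%N.
Proof.
rewrite -(mem_map val_inj) map_take val_enum_ord take_iota mem_iota /=.
by rewrite add0n leq_min ltn_ord andbT.
Qed.

Lemma sum_pred1_le (I : finType) (x : I) (P : pred I) :
  (\sum_(k | P k) (x == k : nat) <= 1)%N.
Proof.
rewrite big_mkcond (bigD1 x) //= big1 => [|k /negbTE]; last first.
  by rewrite eq_sym => ->; case: (P k).
by rewrite eqxx addn0; case: (P x).
Qed.
Theorem theorem1
  (L K : nat) (indep : {set 'I_L} -> bool) (hM : matroid indep K)
  (wbar : 'I_L -> R) (hwbar : forall e, 0 <= wbar e <= 1)
  (astar : 'I_K -> 'I_L) (hinj : injective astar)
  (hbasis : is_basis indep (Astar astar))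
  (hopt : forall A, indep A -> fsum A wbar <= fsum (Astar astar) wbar)
  (hsort : forall i j : 'I_K, (i <= j)%N -> wbar (astar j) <= wbar (astar i))
  (ws : nat -> 'I_L -> R) (hws : forall s e, 0 <= ws s e <= 1)
  (ords : nat -> seq 'I_L) (hrun : omm_valid_run indep ws ords)
  (t : nat) (ht : (1 <= t)%N)
  (at_ : 'I_K -> 'I_L)
  (hat : omm_choice indep ords t = [seq at_ k | k <- enum 'I_K])
  (pi : 'I_K -> 'I_K) (hpi : bijective pi)
  (hpi1 : forall k : 'I_K,
      indep ([set at_ i | i in [pred i : 'I_K | (i < k)%N]] :|: [set astar (pi k)]))
  (hpi2 : forall (k i : 'I_K), at_ k = astar i -> pi k = i) :
  let At := [set at_ k | k : 'I_K] in
  let barA := ~: Astar astar in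
  [/\ fsum (Astar astar) wbar - fsum At wbar <=
        \big[Rplus/0]_(e in barA)
           \big[Rplus/0]_(k : 'I_K | (k < Ke wbar astar e)%N)
              (gapd wbar astar e k * INR (indic at_ pi e k)),
      (forall (e : 'I_L) (k : 'I_K), indic at_ pi e k = 1%N ->
          ucb indep ws ords t (astar k) <= ucb indep ws ords t e),
      (\sum_(e in barA) \sum_(k : 'I_K | (k < Ke wbar astar e)%N) indic at_ pi e k <= K)%N
    & (forall e, e \in barA ->
          (\sum_(k : 'I_K | (k < Ke wbar astar e)%N) indic at_ pi e k <= 1)%N)].
Proof.
move=> At barA.
have piinj : injective pi by apply: bij_inj.
have atinj : injective at_.
  apply/injectiveP; rewrite /injectiveb /dinjectiveb.
  have -> : enum (mem 'I_K) = enum 'I_K by [].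
  rewrite -hat; exact: greedy_from_uniq.
have indic1 : forall e i0 k, at_ i0 = e -> indic at_ pi e k = (pi i0 == k) :> nat.
  move=> e i0 k ai0; rewrite /indic; case: existsP => [[i /andP[/eqP ai /eqP pik]]|no].
    by rewrite -ai in ai0; rewrite (atinj _ _ ai0) pik eqxx.
  case: eqP => // pik; case: no; exists i0; by rewrite ai0 pik !eqxx.
have indic0 : forall e k, (forall i, at_ i != e) -> indic at_ pi e k = 0%N.
  move=> e k no; rewrite /indic; case: existsP => // [[i /andP[ai _]]].
  by move: (no i); rewrite ai.
have part4 : forall e,
    (\sum_(k : 'I_K | (k < Ke wbar astar e)%N) indic at_ pi e k <= 1)%N.
  move=> e; case: (pickP (fun i => at_ i == e)) => [i0 /eqP ai0|no].
    rewrite (eq_bigr (fun k => (pi i0 == k) : nat)); first exact: sum_pred1_le.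
    by move=> k _; rewrite (indic1 e i0).
  by rewrite big1 // => k _; apply: indic0 => i; rewrite no.
split => //.
- have Ke_le : forall e (k : 'I_K), ~~ (k < Ke wbar astar e)%N -> gapd wbar astar e k <= 0.
    move=> e k nk; apply: Rnot_lt_le => hpos; move/negP: nk; apply; rewrite /Ke.
    have hk : (k.+1 <= K)%N := ltn_ord k.
    rewrite -[k : nat]/(nat_of_ord k) -ltnS.
    have <- : #|[set widen_ord hk j | j : 'I_k.+1]| = k.+1.
      rewrite card_imset ?card_ord // => x y /(congr1 val) /= /val_inj //.
    apply: subset_leq_card; apply/subsetP => x /imsetP [j _ ->]; rewrite inE.
    apply/eqP/negbTE/negP => /RlebP; apply: Rlt_not_le.
    have := hsort (widen_ord hk j) k; rewrite /gapd /=.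
    have : (j <= k)%N by rewrite -ltnS ltn_ord.
    move=> jk /(_ jk); rewrite /gapd in hpos; lra.
  have fA : fsum (Astar astar) wbar = \big[Rplus/0]_k wbar (astar (pi k)).
    rewrite /fsum /Astar big_imset /=; last by move=> x y _ _; apply: hinj.
    by rewrite (reindex_inj piinj).
  have fT : fsum At wbar = \big[Rplus/0]_k wbar (at_ k).
    by rewrite /fsum /At big_imset /=; last by move=> x y _ _; apply: atinj.
  rewrite fA fT -big_Rsub.
  rewrite (bigID (fun k => at_ k \in barA)) /=.
  rewrite [X in _ + X <= _]big1 ?Rplus_0_r; last first.
    move=> k; rewrite /barA inE negbK => /imsetP [j _ aj].
    rewrite (hpi2 _ _ aj) -aj; lra.
  rewrite (partition_big at_ (fun e => e \in barA)) //=.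
  apply: big_Rle => e eA.
  case: (pickP (fun i => at_ i == e)) => [i0 /eqP ai0|no].
    rewrite (bigD1 i0) /=; last by rewrite ai0 eA eqxx.
    rewrite big1 ?Rplus_0_r; last first.
      move=> j /andP[/andP[_ /eqP aj] ji]; rewrite -ai0 in aj.
      by move: ji; rewrite (atinj _ _ aj) eqxx.
    rewrite (eq_bigr (fun k => if pi i0 == k then gapd wbar astar e k else 0)); last first.
      by move=> k _; rewrite (indic1 e i0 k ai0); case: eqP => _ /=; lra.
    case: (boolP (pi i0 < Ke wbar astar e)%N) => hk.
      rewrite (bigD1 (pi i0)) //= eqxx big1 ?Rplus_0_r; first by rewrite /gapd ai0; lra.
      by move=> k /andP[_ /negbTE]; rewrite eq_sym => ->.
    rewrite big1; first by have := Ke_le e _ hk; rewrite /gapd ai0; lra.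
    by move=> k kK; case: eqP => // pk; move: hk; rewrite pk kK.
  rewrite [X in X <= _]big1; last by move=> j /andP[_ aj]; move: (no j); rewrite aj.
  rewrite big1 => [|k _]; first lra.
  by rewrite (indic0 e k) /= ?Rmult_0_r // => j; rewrite no.
- move=> e k; rewrite /indic; case: existsP => [[i /andP[/eqP ai /eqP pik]] _ | _ //].
  subst e k; set a := astar (pi i).
  case: (Rle_or_lt (ucb indep ws ords t a) (ucb indep ws ords t (at_ i))) => // hlt.
  exfalso.
  have [hperm hsorted] := hrun t ht.
  have amem : a \in ords t by rewrite (perm_mem hperm) mem_enum.
  rewrite /omm_choice /greedy in hat.
  move: hat hsorted amem; move: (ords t) => s hat hsorted amem.
  case/splitPr: amem hat hsorted => s1 s2 hat hsorted.
  rewrite greedy_from_cat /= in hat.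
  set B := greedy_from indep [::] s1 in hat.
  have hs1 : forall y, y \in s1 -> ucb indep ws ords t a <= ucb indep ws ords t y.
    move: hsorted; rewrite sorted_pairwise; last first.
      move=> y x z /RlebP h1 /RlebP h2; apply/RlebP; lra.
    rewrite pairwise_cat => /andP[/allrelP H _] y ys.
    by apply/RlebP; apply: (H y a ys); rewrite mem_head.
  have [r hr] := greedy_from_prefix _ indep
     (if augments indep [set x in B] a then rcons B a else B) s2.
  rewrite hr in hat.
  have [r' hB] : exists r', [seq at_ k | k <- enum 'I_K] = B ++ r'.
    case: ifP hat => _ <-; last by exists r.
    by exists (a :: r); rewrite -cat_rcons.
  have Btake : B = map at_ (take (size B) (enum 'I_K)).
    by rewrite map_take hB take_size_cat.
  have notiB : at_ i \notin B.
    apply/negP => /greedy_from_sub /= /hs1; lra.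
  have szB : (size B <= i)%N.
    rewrite leqNgt; apply/negP => iB; move: notiB; rewrite Btake.
    by rewrite (mem_map atinj) mem_take_enum iB.
  have Bsub : forall x, x \in B -> exists2 j : 'I_K, (j < i)%N & x = at_ j.
    move=> x; rewrite Btake => /mapP [j]; rewrite mem_take_enum => jB ->.
    by exists j => //; apply: leq_trans jB szB.
  have hind : indep (a |: [set x in B]).
    case: hM => _ hher _ _; apply: (hher _ _ _ (hpi1 i)).
    apply/subsetP => x; rewrite !inE => /orP[/eqP->|xB].
      by rewrite eqxx orbT.
    have [j ji ->] := Bsub x xB; apply/orP; left.
    by apply/imsetP; exists j.
  case: (boolP (a \in B)) => aB.
    have [j ji aj] := Bsub a aB.
    have := hpi2 j (pi i) (esym aj) => /piinj ji'.
    by move: ji; rewrite ji' ltnn.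
  have aug : augments indep [set x in B] a by rewrite /augments inE aB hind.
  rewrite aug in hat.
  have : a \in [seq at_ k | k <- enum 'I_K] by rewrite -hat mem_cat mem_rcons mem_head.
  case/mapP => j _ aj.
  have := hpi2 j (pi i) (esym aj) => /piinj ji.
  have eqa : at_ i = a by rewrite -ji aj.
  by rewrite eqa in hlt; lra.
- apply: (@leq_trans (\sum_(e in barA) \sum_(i : 'I_K) (at_ i == e) : nat)).
    apply: leq_sum => e _.
    case: (pickP (fun i => at_ i == e)) => [i0 /eqP ai0|no].
      rewrite [X in (_ <= X)%N](bigD1 i0) //= ai0 eqxx; exact: leq_trans (part4 e) (leq_addr _ _).
    by rewrite big1 // => k _; apply: indic0 => i; rewrite no.
  apply: (@leq_trans (\sum_e \sum_(i : 'I_K) (at_ i == e) : nat)).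
    rewrite [X in (_ <= X)%N](bigID (fun e => e \in barA)) /=; exact: leq_addr.
  rewrite exchange_big /= (eq_bigr (fun _ => 1%N)); first by rewrite sum1_card card_ord.
  move=> i _; rewrite (bigD1 (at_ i)) //= eqxx big1 // => e /negbTE.
  by rewrite eq_sym => ->.
Qed.
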